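(* Let $A\in\mathbb{R}^{n\times n}$ be symmetric positive definite, $B\in\mathbb{R}^{m\times n}$ and $C\in\mathbb{R}^{l\times m}$, and suppose that the matrix $\mathcal{A}$ defined below is singular. Then for every $\alpha>0$ the matrix $\mathcal{T}_\alpha$ defined below satisfies $\operatorname{index}(\mathcal{I}-\mathcal{T}_\alpha)=1$.
   Context: Let $\mathbf{n}=n+m+l$ and $\mathcal{I}$ be the $\mathbf{n}\times\mathbf{n}$ identity. Define $$\mathcal{A}=\begin{pmatrix}A&B^T&0\\-B&0&-C^T\\0&C&0\end{pmatrix},\quad \mathcal{A}_1=\begin{pmatrix}A&B^T&0\\-B&0&0\\0&0&0\end{pmatrix},\quad \mathcal{A}_2=\begin{pmatrix}0&0&0\\0&0&-C^T\\0&C&0\end{pmatrix},$$ so $\mathcal{A}=\mathcal{A}_1+\mathcal{A}_2$. For $\alpha>0$ the APSS iteration matrix is $$\mathcal{T}_\alpha=(\alpha\mathcal{I}+\mathcal{A}_2)^{-1}(\alpha\mathcal{I}-\mathcal{A}_1)(\alpha\mathcal{I}+\mathcal{A}_1)^{-1}(\alpha\mathcal{I}-\mathcal{A}_2).$$ The index of a square matrix $M$ is the smallest nonnegative integer $k$ such that $\operatorname{rank}(M^{k+1})=\operatorname{rank}(M^k)$. *)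

(* Defs.v *)
From HB Require Import structures.
From mathcomp Require Import all_boot all_order all_algebra.
Set Implicit Arguments. Unset Strict Implicit. Unset Printing Implicit Defensive.
Import Order.TTheory GRing.Theory Num.Theory.
Local Open Scope ring_scope.

(* Index of a square matrix: the smallest k with rank(M^(k+1)) = rank(M^k).
   Such a k always exists and is <= p, so searching 0..p is exact. *)
Definition mxindex (F : fieldType) (p : nat) (M : 'M[F]_p) : nat :=
  find (fun k => \rank (M ^+ k.+1) == \rank (M ^+ k)) (iota 0 p.+1).

Definition spd (R : realFieldType) (n : nat) (A : 'M[R]_n) : Prop :=
  A^T = A /\ forall x : 'cV[R]_n, x != 0 -> 0 < (x^T *m A *m x) 0 0.

Definition bigA (R : realFieldType) n m l (A : 'M[R]_n) (B : 'M[R]_(m, n))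
  (C : 'M[R]_(l, m)) : 'M[R]_(n + m + l) :=
  block_mx (block_mx A B^T (- B) 0) (col_mx 0 (- C^T)) (row_mx 0 C) 0.

Definition bigA1 (R : realFieldType) n m l (A : 'M[R]_n) (B : 'M[R]_(m, n))
  : 'M[R]_(n + m + l) :=
  block_mx (block_mx A B^T (- B) 0) 0 0 0.

Definition bigA2 (R : realFieldType) n m l (C : 'M[R]_(l, m))
  : 'M[R]_(n + m + l) :=
  block_mx 0 (col_mx (0 : 'M[R]_(n, l)) (- C^T)) (row_mx (0 : 'M[R]_(l, n)) C) 0.

Definition APSS (R : realFieldType) n m l (A : 'M[R]_n) (B : 'M[R]_(m, n))
  (C : 'M[R]_(l, m)) (alpha : R) : 'M[R]_(n + m + l) :=
  let I := (1%:M : 'M[R]_(n + m + l)) in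
  let A1 := bigA1 l A B in
  let A2 := bigA2 n C in
  invmx (alpha *: I + A2) *m (alpha *: I - A1) *m invmx (alpha *: I + A1)
    *m (alpha *: I - A2).

(* Main.v *)
Require Import Defs.
From mathcomp Require Import all_boot all_order all_algebra.
From mathcomp Require Import ring.
Import Order.TTheory GRing.Theory Num.Theory.
Local Open Scope ring_scope.
Set Implicit Arguments. Unset Strict Implicit.

Section S.
Variable R : realFieldType.

Lemma mxindex1 p (M : 'M[R]_p) : \rank M != p -> \rank (M ^+ 2) = \rank M -> mxindex M = 1%N.
Proof.
case: p M => [|p] M hM h2.
  by move: hM; have := rank_leq_row M; rewrite leqn0 => ->.
by rewrite /mxindex /= expr1 h2 eqxx expr0 -idmxE mxrank1 (negbTE hM).
Qed.

Lemma split3 n m l (u : 'rV[R]_(n + m + l)) :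
  exists w1 w2 w3, u = row_mx (row_mx w1 w2) w3.
Proof. by exists (lsubmx (lsubmx u)), (rsubmx (lsubmx u)), (rsubmx u); rewrite !hsubmxK. Qed.

Lemma inj_unitmx p (X : 'M[R]_p) : (forall u : 'rV_p, u *m X = 0 -> u = 0) -> X \in unitmx.
Proof.
move=> H; rewrite -row_free_unit -kermx_eq0; apply/eqP/row_matrixP => i.
by rewrite row0; apply: H; apply/sub_kermxP; exact: row_sub.
Qed.

Lemma cap_ker0 p (K : 'M[R]_p) :
  (forall u v : 'rV_p, u = v *m K -> u *m K = 0 -> u = 0) -> \rank (K *m K) = \rank K.
Proof.
move=> H; have := mxrank_mul_ker K K.
suff ->: (K :&: kermx K)%MS = 0 by rewrite mxrank0 addn0.
apply/row_matrixP => i; rewrite row0.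
have := row_sub i (K :&: kermx K)%MS; rewrite sub_capmx => /andP [/submxP [v hv] /sub_kermxP hk].
exact: H hv hk.
Qed.

Lemma normsq p (u : 'rV[R]_p) : (u *m u^T) 0 0 = \sum_j u 0 j ^+ 2.
Proof. by rewrite !mxE; apply: eq_bigr => j _; rewrite mxE expr2. Qed.

Lemma normsq_ge0 p (u : 'rV[R]_p) : 0 <= (u *m u^T) 0 0.
Proof. by rewrite normsq; apply: sumr_ge0 => j _; exact: sqr_ge0. Qed.

Lemma normsq0 p (u : 'rV[R]_p) : (u *m u^T) 0 0 = 0 -> u = 0.
Proof.
rewrite normsq => /psumr_eq0P H; apply/matrixP => i j.
rewrite (ord1 i) mxE; apply/eqP; rewrite -sqrf_eq0; apply/eqP; apply: H => // k _; exact: sqr_ge0.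
Qed.

Lemma quad_tr p (u : 'rV[R]_p) (X : 'M[R]_p) : (u *m X^T *m u^T) 0 0 = (u *m X *m u^T) 0 0.
Proof. by rewrite -{1}(trmxK u) -trmx_mul -mulmxA -trmx_mul mxE mulmxA. Qed.


Lemma tr11 (X : 'M[R]_1) : X^T = X.
Proof. by apply/matrixP => i j; rewrite (ord1 i) (ord1 j) mxE. Qed.

Lemma trrow3 n m l (u1 : 'rV[R]_n) (u2 : 'rV[R]_m) (u3 : 'rV[R]_l) :
  (row_mx (row_mx u1 u2) u3)^T = col_mx (col_mx u1^T u2^T) u3^T.
Proof. by rewrite !tr_row_mx. Qed.

Lemma spd_ge0 n (A : 'M[R]_n) (u : 'rV[R]_n) : spd A -> 0 <= (u *m A *m u^T) 0 0.
Proof.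
move=> [_ hA]; have [->|nz] := eqVneq u 0; first by rewrite !mul0mx mxE.
have := hA u^T; rewrite trmxK => h; apply/ltW/h.
by apply: contra nz => /eqP h0; rewrite -(trmxK u) h0 trmx0.
Qed.

Lemma quadA1 n m l (A : 'M[R]_n) (B : 'M[R]_(m, n)) (u1 : 'rV[R]_n) (u2 : 'rV[R]_m) (u3 : 'rV[R]_l) :
  spd A -> 0 <= (row_mx (row_mx u1 u2) u3 *m bigA1 l A B *m (row_mx (row_mx u1 u2) u3)^T) 0 0.
Proof.
move=> hA; rewrite trrow3 /bigA1 mul_row_block !mulmx0 !addr0 mul_row_block mulmx0 addr0.
rewrite mul_row_col mul0mx addr0 mul_row_col mulmxDl mulmxN mulNmx.
have ->: (u2 *m B *m u1^T) = (u1 *m B^T *m u2^T)^T by rewrite !trmx_mul !trmxK mulmxA.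
by rewrite tr11 subrK; apply: spd_ge0.
Qed.


Lemma quadA2 n m l (C : 'M[R]_(l, m)) (u1 : 'rV[R]_n) (u2 : 'rV[R]_m) (u3 : 'rV[R]_l) :
  (row_mx (row_mx u1 u2) u3 *m bigA2 n C *m (row_mx (row_mx u1 u2) u3)^T) 0 0 = 0.
Proof.
rewrite trrow3 /bigA2 mul_row_block !mulmx0 !addr0 mul_row_col mul_mx_row.
rewrite mulmx0 add0r !mul_row_col mul0mx add0r mulmx0 add0r mulmxN mulNmx.
have ->: u2 *m C^T *m u3^T = (u3 *m C *m u2^T)^T by rewrite !trmx_mul !trmxK mulmxA.
by rewrite tr11 subrr mxE.
Qed.

Lemma ker_props n m l (A : 'M[R]_n) (B : 'M[R]_(m, n)) (C : 'M[R]_(l, m))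
  (w1 : 'rV[R]_n) (w2 : 'rV[R]_m) (w3 : 'rV[R]_l) :
  spd A -> row_mx (row_mx w1 w2) w3 *m bigA A B C = 0 ->
  [/\ w1 = 0, w2 *m B = 0, w3 *m C = 0 & w2 *m C^T = 0].
Proof.
move=> hA; rewrite /bigA mul_row_block mul_row_block mul_mx_row mul_row_col !mulmx0.
rewrite !addr0 !add0r add_row_mx ?addr0 ?add0r !mulmxN => /eqP.
rewrite !row_mx_eq0 => /andP [/andP [/eqP h1 /eqP h2] /eqP h3].
have hC : w2 *m C^T = 0 by rewrite -[LHS]opprK h3 oppr0.
have hwB : w1 *m B^T = - (w3 *m C) by apply/eqP; rewrite -subr_eq0 opprK h2.
have hwA : w1 *m A = w2 *m B by apply/eqP; rewrite -subr_eq0 h1.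
have q0 : w1 *m A *m w1^T = 0.
  rewrite hwA; have ->: w2 *m B *m w1^T = (w1 *m B^T *m w2^T)^T by rewrite !trmx_mul !trmxK mulmxA.
  rewrite hwB mulNmx -mulmxA.
  have ->: C *m w2^T = (w2 *m C^T)^T by rewrite trmx_mul trmxK.
  by rewrite hC trmx0 mulmx0 oppr0 trmx0.
have w10 : w1 = 0.
  apply/eqP; apply: contraT => nz; case: hA => _ hA.
  have := hA w1^T; rewrite trmxK q0 mxE ltxx; apply.
  by apply: contra nz => /eqP h0; rewrite -(trmxK w1) h0 trmx0.
split => //.
- by rewrite -hwA w10 mul0mx.
- by apply/eqP; rewrite -oppr_eq0 -hwB w10 mul0mx.
Qed.


Lemma ker_A1 n m l (A : 'M[R]_n) (B : 'M[R]_(m, n))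
  (w1 : 'rV[R]_n) (w2 : 'rV[R]_m) (w3 : 'rV[R]_l) :
  w1 = 0 -> w2 *m B = 0 -> row_mx (row_mx w1 w2) w3 *m bigA1 l A B = 0.
Proof.
move=> -> hB; rewrite /bigA1 mul_row_block mul_row_block !mulmx0 !mul0mx mulmxN hB.
by rewrite !addr0 !add0r oppr0 !row_mx0.
Qed.

Lemma ker_tr n m l (A : 'M[R]_n) (B : 'M[R]_(m, n)) (C : 'M[R]_(l, m))
  (w1 : 'rV[R]_n) (w2 : 'rV[R]_m) (w3 : 'rV[R]_l) :
  w1 = 0 -> w2 *m B = 0 -> w3 *m C = 0 -> w2 *m C^T = 0 ->
  row_mx (row_mx w1 w2) w3 *m (bigA A B C)^T = 0.
Proof.
move=> -> hB hC hCt; rewrite /bigA tr_block_mx tr_block_mx tr_col_mx tr_row_mx !trmx0 !trmxK.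
rewrite mul_row_block mul_row_block mul_mx_row mul_row_col !mulmx0 !mul0mx.
by rewrite raddfN /= trmxK mulmxN hB hC hCt oppr0 ?addr0 ?add0r ?row_mx0 ?addr0 ?add0r ?row_mx0.
Qed.


Lemma key_id p (a : R) (X Y : 'M[R]_p) :
  (a%:M + X) *m (a%:M + Y) - (a%:M - X) *m (a%:M - Y) = (a + a) *: (X + Y).
Proof.
rewrite !mulmxDl !mulmxDr ?mulNmx ?mulmxN !mul_scalar_mx ?mul_mx_scalar.
by apply/matrixP => i j; rewrite !mxE; ring.
Qed.

Lemma comm_id p (a : R) (X : 'M[R]_p) :
  (a%:M + X) *m (a%:M - X) = (a%:M - X) *m (a%:M + X).
Proof.
rewrite !mulmxDl !mulmxDr ?mulNmx ?mulmxN !mul_scalar_mx ?mul_mx_scalar.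
by rewrite !addrA subrK addrK.
Qed.

Lemma inj_shift p (X : 'M[R]_p) a : 0 < a -> (forall u : 'rV_p, 0 <= (u *m X *m u^T) 0 0) ->
  a *: 1%:M + X \in unitmx.
Proof.
move=> ha hX; apply: inj_unitmx => u hu.
have : (u *m (a *: 1%:M + X) *m u^T) 0 0 = 0 by rewrite hu mul0mx mxE.
rewrite mulmxDr mulmxDl scalemx1 mul_mx_scalar -scalemxAl mxE [X in X + _]mxE => h.
apply: normsq0; apply/eqP; move/eqP: h; rewrite paddr_eq0 ?hX ?mulr_ge0 ?normsq_ge0 ?(ltW ha) //.
by rewrite mulf_eq0 gt_eqF //= => /andP [].
Qed.


Lemma rank_lunit p q (P : 'M[R]_p) (X : 'M[R]_(p, q)) : P \in unitmx -> \rank (P *m X) = \rank X.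
Proof.
move=> hP; rewrite -mxrank_tr trmx_mul mxrankMfree ?mxrank_tr //.
by rewrite row_free_unit unitmx_tr.
Qed.

End S.

Theorem mainTheorem1 (R : realFieldType) (n m l : nat)
  (A : 'M[R]_n) (B : 'M[R]_(m, n)) (C : 'M[R]_(l, m)) :
  spd A ->
  \det (bigA A B C) = 0 ->
  forall alpha : R, 0 < alpha ->
    mxindex (1%:M - APSS A B C alpha) = 1%N.
Proof.
move=> hA hdet alpha ha.
have hsum : bigA1 l A B + bigA2 n C = bigA A B C.
  by rewrite /bigA1 /bigA2 /bigA add_block_mx !addr0 !add0r.
have q1 : forall u : 'rV[R]_(n + m + l), 0 <= (u *m bigA1 l A B *m u^T) 0 0.
  by move=> u; have [w1 [w2 [w3 ->]]] := split3 u; exact: quadA1.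
have q2 : forall u : 'rV[R]_(n + m + l), 0 <= (u *m bigA2 n C *m u^T) 0 0.
  by move=> u; have [w1 [w2 [w3 ->]]] := split3 u; rewrite quadA2.
have hU1 := inj_shift ha q1; have hU2 := inj_shift ha q2.
rewrite scalemx1 in hU1 hU2.
rewrite /APSS /= !scalemx1.
set A1 := bigA1 l A B in hsum q1 hU1 *; set A2 := bigA2 n C in hsum q2 hU2 *.
set AA := bigA A B C in hsum hdet *.
set W := (alpha%:M + A1) *m (alpha%:M + A2).
have hWu : W \in unitmx by rewrite unitmx_mul hU1 hU2.
set N := (X in mxindex X).
have hW : W *m N = (alpha + alpha) *: AA.
  rewrite /N /W mulmxBr mulmx1 !mulmxA (mulmxK hU2) comm_id (mulmxK hU1).
  by rewrite key_id hsum.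
have hN : N = invmx W *m ((alpha + alpha) *: AA) by rewrite -hW mulKmx.
have a2 : alpha + alpha != 0 by rewrite gt_eqF // addr_gt0.
apply: mxindex1.
  rewrite hN rank_lunit ?unitmx_inv // (eqmx_scale _ a2).
  apply/negP => /eqP h; have : AA \in unitmx by rewrite -row_free_unit /row_free h.
  by rewrite unitmxE hdet unitr0.
rewrite expr2 -mulmxE; apply: cap_ker0 => u v huv huN.
set w := u *m invmx W.
have hu : u = w *m W by rewrite /w mulmxKV.
have hwA : w *m AA = 0.
  move: huN; rewrite hN mulmxA -/w -scalemxAr => /eqP.
  by rewrite scaler_eq0 (negbTE a2) /= => /eqP.
have [w1 [w2 [w3 hw]]] := split3 w.
have [h1 h2 h3 h4] : [/\ w1 = 0, w2 *m B = 0, w3 *m C = 0 & w2 *m C^T = 0].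
  by apply: (ker_props hA); rewrite -hw.
have hwA1 : w *m A1 = 0 by rewrite hw; exact: ker_A1.
have hwT : w *m AA^T = 0 by rewrite hw; exact: ker_tr.
have hwA2 : w *m A2 = 0 by move: hwA; rewrite -hsum mulmxDr hwA1 add0r.
have hwW : w *m W = (alpha * alpha) *: w.
  rewrite /W mulmxA [w *m (_ + A1)]mulmxDr hwA1 addr0 mul_mx_scalar -scalemxAl mulmxDr hwA2 addr0.
  by rewrite mul_mx_scalar scalerA.
have hz : u = ((alpha + alpha) *: (v *m invmx W)) *m AA.
  by rewrite huv hN mulmxA -scalemxAl -scalemxAr.
have : (alpha * alpha) *: (w *m w^T) = 0.
  rewrite scalemxAl -hwW -hu {1}hz -mulmxA.
  have -> : AA *m w^T = (w *m AA^T)^T by rewrite [RHS]trmx_mul trmxK.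
  by rewrite hwT trmx0 mulmx0.
move/eqP; rewrite scaler_eq0 mulf_eq0 gt_eqF //= => /eqP hww.
have w0 : w = 0 by apply: normsq0; rewrite hww mxE.
by rewrite hu w0 mul0mx.
Qed.
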